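(* Let $\Lambda$ be the preprojective algebra of a simply-laced Dynkin graph $\Delta$ over an algebraically closed field $K$, with primitive idempotents $e_i$ ($i\in\Delta_0$). Let $\phi\in\mathrm{Aut}(\Lambda)$, and let $\rho^\phi$ be the permutation of $\Delta_0$ such that $\phi(e_i)=\lambda e_{\rho^\phi(i)}\lambda^{-1}$ for all $i\in\Delta_0$ for some unit $\lambda\in\Lambda^\times$. Then $\rho^\phi$ is a graph automorphism of $\Delta$.
   Context: For every $\phi\in\mathrm{Aut}(\Lambda)$ there exist a unit $\lambda\in\Lambda^\times$ and a unique permutation $\rho^\phi$ of $\Delta_0$ with $\phi(e_i)=\lambda e_{\rho^\phi(i)}\lambda^{-1}$ for all $i$; $\rho^\phi$ depends only on the class of $\phi$ in $\mathrm{Out}(\Lambda)=\mathrm{Aut}(\Lambda)/\mathrm{Inn}(\Lambda)$. *)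

(* Defs.v *)
From HB Require Import structures.
From mathcomp Require Import all_boot all_order all_algebra all_fingroup.
Set Implicit Arguments. Unset Strict Implicit. Unset Printing Implicit Defensive.
Import GRing.Theory.
Local Open Scope ring_scope.

Inductive dynkin_type := TA of nat | TD of nat | TE of nat.

Definition dynkin_valid (t : dynkin_type) : bool :=
  match t with
  | TA n => (0 < n)%N
  | TD n => (3 < n)%N
  | TE n => (5 < n)%N && (n < 9)%N
  end.

Definition dynkin_rank (t : dynkin_type) : nat :=
  match t with TA n | TD n | TE n => n end.

Definition path_adj (m i j : nat) : bool :=
  ((i.+1 == j) && (j < m)%N) || ((j.+1 == i) && (i < m)%N).

(* standard labelled Dynkin graphs on {0,...,n-1}:
   A_n : path 0 - ... - (n-1)
   D_n : path 0 - ... - (n-2), plus an edge (n-1) - (n-3)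
   E_n : path 0 - ... - (n-2), plus an edge (n-1) - 2 *)
Definition dynkin_adj_nat (t : dynkin_type) (i j : nat) : bool :=
  match t with
  | TA n => path_adj n i j
  | TD n => [|| path_adj n.-1 i j, (i == n.-1) && (j == n - 3)%N
              | (j == n.-1) && (i == n - 3)%N]
  | TE n => [|| path_adj n.-1 i j, (i == n.-1) && (j == 2%N)
              | (j == n.-1) && (i == 2%N)]
  end.

Definition is_dynkin_graph (V : finType) (adj : rel V) : Prop :=
  exists t : dynkin_type, dynkin_valid t /\
    exists f : V -> 'I_(dynkin_rank t),
      bijective f /\ forall u v, adj u v = dynkin_adj_nat t (f u) (f v).

Definition graph_automorphism (V : finType) (adj : rel V) (rho : {perm V}) : Prop :=
  forall u v, adj (rho u) (rho v) = adj u v.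

(* Orientation of the Dynkin graph used for the preprojective relation:
   the arrow i -> j is in Q when i precedes j in the enumeration of V;
   the other one is the starred arrow. *)
Definition pp_sign (R : nzRingType) (V : finType) (i j : V) : R :=
  if (enum_rank i < enum_rank j)%N then 1 else -1.

(* e i = trivial path at i; x i j = arrow i -> j of the double quiver
   (zero when i, j are not adjacent); paths are written left to right. *)
Definition preproj_rel (R : nzRingType) (V : finType) (adj : rel V)
    (e : V -> R) (x : V -> V -> R) : Prop :=
  [/\ forall i j, e i * e j = (if i == j then e i else 0),
      \sum_i e i = 1,
      forall i j, x i j = e i * x i j * e j,
      forall i j, ~~ adj i j -> x i j = 0
    & forall i, \sum_(j | adj i j) pp_sign R i j * (x i j * x j i) = 0].

(* (A, e, x) is the preprojective algebra of adj over K: the K-algebra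
   presented by the generators e, x subject to the relations above
   (universal property). *)
Definition is_preprojective (K : fieldType) (V : finType) (adj : rel V)
    (A : algType K) (e : V -> A) (x : V -> V -> A) : Prop :=
  preproj_rel adj e x /\
  forall (B : algType K) (e' : V -> B) (x' : V -> V -> B),
    preproj_rel adj e' x' ->
    (exists f : {lrmorphism A -> B},
        (forall i, f (e i) = e' i) /\ (forall i j, f (x i j) = x' i j)) /\
    (forall f g : {lrmorphism A -> B},
        (forall i, f (e i) = e' i) -> (forall i j, f (x i j) = x' i j) ->
        (forall i, g (e i) = e' i) -> (forall i j, g (x i j) = x' i j) ->
        f =1 g).

(* Main.v *)
Set Warnings "-notation-overridden,-ambiguous-paths".
Require Import Defs.
From HB Require Import structures.
From mathcomp Require Import all_boot all_order all_algebra all_fingroup.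
From mathcomp Require Import zify.
Import GRing.Theory.
Set Implicit Arguments. Unset Strict Implicit.
Local Open Scope ring_scope.

Definition conjf (K : fieldType) (B : algType K) (l m : B)
  (Hlm : l * m = 1) (Hml : m * l = 1) (b : B) : B := m * b * l.

Lemma conjf_lin (K : fieldType) (B : algType K) (l m : B)
  (Hlm : l * m = 1) (Hml : m * l = 1) : linear (conjf Hlm Hml).
Proof. by move=> a u v; rewrite /conjf mulrDr mulrDl -scalerAr -scalerAl. Qed.

Lemma conjf_mul (K : fieldType) (B : algType K) (l m : B)
  (Hlm : l * m = 1) (Hml : m * l = 1) : monoid_morphism (conjf Hlm Hml).
Proof.
split; first by rewrite /conjf mulr1.
by move=> u v; rewrite /conjf -!mulrA (mulrA l) Hlm mul1r.
Qed.

HB.instance Definition _ (K : fieldType) (B : algType K) (l m : B)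
  (Hlm : l * m = 1) (Hml : m * l = 1) :=
  GRing.isLinear.Build K B B *:%R (conjf Hlm Hml) (conjf_lin Hlm Hml).
HB.instance Definition _ (K : fieldType) (B : algType K) (l m : B)
  (Hlm : l * m = 1) (Hml : m * l = 1) :=
  GRing.isMonoidMorphism.Build B B (conjf Hlm Hml) (conjf_mul Hlm Hml).


Lemma dyn_props (V : finType) (adj : rel V) : is_dynkin_graph adj ->
  (forall u, ~~ adj u u) /\ (forall u v, adj u v = adj v u).
Proof.
move=> [t [vt [f [_ Hf]]]]; split.
  move=> u; rewrite Hf; move: (nat_of_ord (f u)) => i.
  case: t vt {f Hf} => n /= vt; rewrite /path_adj.
  - by rewrite !(eqn_leq i.+1 i) ltnn.
  - rewrite !(eqn_leq i.+1 i) ltnn /=; apply/negP.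
    by case/orP=> /andP[/eqP-> /eqP]; lia.
  - rewrite !(eqn_leq i.+1 i) ltnn /=; apply/negP.
    by case/orP=> /andP[/eqP-> /eqP]; lia.
move=> u v; rewrite !Hf; move: (nat_of_ord (f u)) (nat_of_ord (f v)) => i j.
case: t vt {f Hf} => n /= _; rewrite /path_adj;
  by apply/idP/idP; lia.
Qed.

Lemma preserve (K : fieldType) (V : finType) (adj : rel V) (A B : algType K)
  (e : V -> A) (x : V -> V -> A) (f : {lrmorphism A -> B}) :
  preproj_rel adj e x -> preproj_rel adj (fun i => f (e i)) (fun i j => f (x i j)).
Proof.
case=> H1 H2 H3 H4 H5; split.
- by move=> i j; rewrite -rmorphM H1; case: eqP => _; rewrite ?rmorph0.
- by rewrite -rmorph_sum H2 rmorph1.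
- by move=> i j; rewrite -!rmorphM -H3.
- by move=> i j /H4 ->; rewrite rmorph0.
- move=> i; rewrite -[X in _ = X](rmorph0 f) -[X in _ = f X](H5 i) rmorph_sum.
  apply: eq_bigr => j _; rewrite rmorphM rmorphM; congr (_ * _).
  by rewrite /pp_sign; case: ifP => _; rewrite ?rmorph1 ?rmorphN1.
Qed.

Definition E11 (K : fieldType) : 'M[K]_2 := delta_mx 0 0.
Definition E12 (K : fieldType) : 'M[K]_2 := delta_mx 0 1.

Lemma E11E11 (K : fieldType) : E11 K * E11 K = E11 K.
Proof. by rewrite -mulmxE mul_delta_mx. Qed.
Lemma E11E12 (K : fieldType) : E11 K * E12 K = E12 K.
Proof. by rewrite -mulmxE mul_delta_mx. Qed.
Lemma E12E11 (K : fieldType) : E12 K * E11 K = 0.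
Proof. by rewrite -mulmxE mul_delta_mx_0. Qed.
Lemma E12E12 (K : fieldType) : E12 K * E12 K = 0.
Proof. by rewrite -mulmxE mul_delta_mx_0. Qed.
Lemma E12_neq0 (K : fieldType) : E12 K != 0.
Proof. apply/eqP => /matrixP /(_ 0 1); rewrite !mxE /= => /eqP; rewrite oner_eq0. by []. Qed.

Definition Ge (K : fieldType) (V : finType) (a b : V) (i : V) : 'M[K]_2 :=
  if i == a then E11 K else if i == b then 1 - E11 K else 0.
Definition Gx (K : fieldType) (V : finType) (a b : V) (s : K) (i j : V) : 'M[K]_2 :=
  if (i == a) && (j == b) then s *: E12 K else 0.

Lemma rep_ok (K : fieldType) (V : finType) (adj : rel V) (a b : V) (s : K) :
  adj a b -> a != b -> preproj_rel adj (Ge K a b) (Gx a b s).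
Proof.
move=> Hab ab; have ba : b != a by rewrite eq_sym.
split.
- move=> i j; rewrite /Ge.
  case: (eqVneq i a) => [?|ia]; try subst i; case: (eqVneq j a) => [?|ja]; try subst j;
    rewrite ?eqxx ?(negPf ab) ?(negPf ba) ?(negPf ia) ?(negPf ja) ?E11E11 //.
  + case: ifP => _; rewrite ?mulr0 //.
    by rewrite mulrBr mulr1 E11E11 subrr.
  + case: ifP => _; last by rewrite mul0r.
    by rewrite mulrBl mul1r E11E11 subrr.
  + case: (eqVneq i b) => [?|ib]; try subst i; case: (eqVneq j b) => [?|jb]; try subst j;
      rewrite ?eqxx ?(negPf ib) ?(negPf jb) ?mulr0 ?mul0r //.
    * by rewrite mulrBr mulr1 mulrBl mul1r E11E11 subrr subr0.
    * by case: ifP.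
- rewrite (bigD1 a) //= (bigD1 b) //= big1 ?addr0.
    by rewrite /Ge eqxx (negPf ba) eqxx addrC subrK.
  by move=> i /andP[ib ia]; rewrite /Ge (negPf ia) (negPf ib).
- move=> i j; rewrite /Gx /Ge; case: (eqVneq i a) => [?|ia]; try subst i; last by rewrite mulr0 mul0r.
  case: (eqVneq j b) => [?|jb]; try subst j; last by rewrite mulr0 mul0r.
  by rewrite /= (negPf ba) -scalerAr -scalerAl mulrBr mulr1 E11E12 E12E11 subr0.
- move=> i j Nij; rewrite /Gx; case: (eqVneq i a) => [Ei|] //=; case: (eqVneq j b) => [Ej|] //.
  by rewrite Ei Ej Hab in Nij.
- move=> i; apply: big1 => j _; rewrite /Gx.
  case: (eqVneq i a) => [?|]; try subst i; last by rewrite mul0r mulr0.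
  case: (eqVneq j b) => [?|]; try subst j; last by rewrite mul0r mulr0.
  by rewrite (negPf ba) mulr0 mulr0.
Qed.

Lemma main_dir (K : closedFieldType) (V : finType) (adj : rel V)
    (A : algType K) (e : V -> A) (x : V -> V -> A)
    (phi : {lrmorphism A -> A}) (rho : {perm V}) :
  is_dynkin_graph adj ->
  is_preprojective adj e x ->
  bijective phi ->
  (exists lam mu : A,
      [/\ lam * mu = 1, mu * lam = 1 & forall i, phi (e i) = lam * e (rho i) * mu]) ->
  forall u v, adj (rho u) (rho v) -> adj u v.
Proof.
move=> /dyn_props [Hirr Hsym] [Hrel Huniv] [phinv phiK phinvK]
  [lam [mu [Hlm Hml Hphie]]] u v Hab.
apply/negPn/negP => Nuv.
set a := rho u in Hab; set b := rho v in Hab.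
have ab : a != b by apply/eqP => E; move: Hab; rewrite E (negPf (Hirr _)).
have [[G1 [G1e G1x]] _] := Huniv _ _ _ (@rep_ok K V adj a b 1 Hab ab).
have [[G0 [G0e G0x]] _] := Huniv _ _ _ (@rep_ok K V adj a b 0 Hab ab).
pose psi := (conjf Hlm Hml \o phi : {lrmorphism A -> A}).
have psie i : conjf Hlm Hml (phi (e i)) = e (rho i).
  by rewrite /= /conjf Hphie !mulrA Hml mul1r -mulrA Hml mulr1.
have psic : conjf Hlm Hml (phi (phinv (lam * x a b * mu))) = x a b.
  by rewrite /= /conjf phinvK !mulrA Hml mul1r -mulrA Hml mulr1.
case: Hrel => R1 R2 R3 R4 R5.
have Hx (G : {lrmorphism A -> 'M[K]_2}) : (forall i, G (e i) = Ge K a b i) ->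
    forall i j, G (psi (x i j)) = 0.
  move=> Ge_ i j; case Aij: (adj i j); last first.
    by rewrite (R4 i j) ?Aij // !raddf0.
  have Ge' k : (G : {rmorphism A -> 'M[K]_2}) (e k) = Ge K a b k := Ge_ k.
  have psie' k : (psi : {rmorphism A -> A}) (e k) = e (rho k) := psie k.
  rewrite R3 !(rmorphM psi) !psie' !(rmorphM G) !Ge' /Ge.
  case: (eqVneq (rho i) a) => [Ei|ia].
    case: (eqVneq (rho j) a) => [Ej|ja].
      by move: Aij; rewrite (perm_inj (etrans Ei (esym Ej))) (negPf (Hirr _)).
    case: (eqVneq (rho j) b) => [Ej|jb]; last by rewrite mulr0.
    move: Aij; rewrite (perm_inj Ei) (perm_inj Ej) => Auv.
    by rewrite Auv in Nuv.
  case: (eqVneq (rho i) b) => [Ei|ib]; last by rewrite !mul0r.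
  case: (eqVneq (rho j) a) => [Ej|ja].
    move: Aij; rewrite (perm_inj Ei) (perm_inj Ej) Hsym => Auv.
    by rewrite Auv in Nuv.
  case: (eqVneq (rho j) b) => [Ej|jb]; last by rewrite mulr0.
  by move: Aij; rewrite (perm_inj (etrans Ei (esym Ej))) (negPf (Hirr _)).
pose H1 := (G1 \o psi : {lrmorphism A -> 'M[K]_2}).
pose H0 := (G0 \o psi : {lrmorphism A -> 'M[K]_2}).
have [_ Uniq] := Huniv _ _ _ (preserve H1 (And5 R1 R2 R3 R4 R5)).
have := Uniq H1 H0 (fun i => erefl) (fun i j => erefl).
have H0e i : H0 (e i) = H1 (e i) by rewrite /= psie G0e G1e.
have H0x i j : H0 (x i j) = H1 (x i j).
  by rewrite [LHS](Hx G0 G0e) [RHS](Hx G1 G1e).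
move=> /(_ H0e H0x (phinv (lam * x a b * mu))).
rewrite /= psic G1x G0x /Gx !eqxx /= scale1r scale0r => /eqP.
by rewrite (negPf (E12_neq0 K)).
Qed.

Theorem lemma4p6 (K : closedFieldType) (V : finType) (adj : rel V)
    (A : algType K) (e : V -> A) (x : V -> V -> A)
    (phi : {lrmorphism A -> A}) (rho : {perm V}) :
  is_dynkin_graph adj ->
  is_preprojective adj e x ->
  bijective phi ->
  (exists lam mu : A,
      [/\ lam * mu = 1, mu * lam = 1 & forall i, phi (e i) = lam * e (rho i) * mu]) ->
  graph_automorphism adj rho.
Proof.
move=> Hd Hp Hb Hl.
have D := main_dir Hd Hp Hb Hl.
pose f := fun p : V * V => (rho p.1, rho p.2).
have injf : injective f.
  by move=> [p1 p2] [q1 q2] [/perm_inj -> /perm_inj ->].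
pose S := [set p : V * V | adj p.1 p.2].
have sub : f @^-1: S \subset S.
  by apply/subsetP => [[p1 p2]]; rewrite !inE /= => /D.
have Eq := subset_cardP (card_preimset S injf) sub.
move=> u v; have := Eq (u, v); rewrite !inE /=.
by move=> ->.
Qed.
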